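(* Let $(\rho,m,\theta)$ be a smooth positive triple on $(0,T]\times\omega$ with $m=0$ on $\partial\omega$ which satisfies, for all $t$ and all $q\in L^2(\omega)$, $v\in H_0(\mathrm{div};\omega)$, $w\in H^1(\omega)$, \begin{align*} (\partial_t\rho,q)+(\partial_x m,q)&=0,\\ \Big(\frac1\rho\partial_t m-\frac{m}{2\rho^2}\partial_t\rho,v\Big)-\Big(\frac{m^2}{2\rho^2}+(\rho P)_\rho,\partial_x v\Big)+\Big(\frac{m}{2\rho^2}\partial_x m-P_\theta\partial_x\theta,v\Big)&=0,\\ \Big(\rho\,\partial_t e-\frac p\rho\partial_t\rho,\frac w\theta\Big)-\Big(Q-\theta P_\theta,\partial_x\Big(m\frac w\theta\Big)\Big)+\Big(mP_\theta\partial_x\theta,\frac w\theta\Big)&=0. \end{align*} Then \[ \frac{d}{dt}\int_\omega\rho\,dx=0,\qquad \frac{d}{dt}\int_\omega E\,dx=0,\qquad \frac{d}{dt}\int_\omega\rho s\,dx=0. \]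
   Context: Let $\omega=[v_1,v_2]\subset\mathbb R$ be a bounded closed interval; $(u,v)=\int_\omega uv\,dx$, $H^1(\omega)=\{w\in L^2:\partial_x w\in L^2\}$, $H_0(\mathrm{div};\omega)=\{v\in L^2:\partial_x v\in L^2,\ v=0\text{ on }\partial\omega\}$. Subscripts denote partial derivatives. The constitutive relations are given through a pressure potential $P\in C^3((0,\infty)^2)$ and a thermal potential $Q\in C^2((0,\infty))$ (function of $\theta$ only), satisfying for all $\rho,\theta>0$: $P_\rho\ge 0$, $(\rho P_\rho)_\rho\ge 0$, and $Q_\theta-\theta P_{\theta\theta}\ge \underline c_v>0$. The pressure is $p=\rho^2P_\rho$, the specific internal energy $e=P-\theta P_\theta+Q$, the specific entropy $s(\rho,\theta)=\int_1^\theta\frac{Q_\theta(t)}{t}dt-P_\theta(\rho,\theta)$, and the total energy density $E=\frac{m^2}{2\rho}+\rho e$, all evaluated at $(\rho,\theta)$. A smooth positive triple is $(\rho,m,\theta)\in C^1((0,T]\times\omega)^3$ with $\rho,\theta>0$. *)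

(* Defs.v *)
From Stdlib Require Import Reals Lra ClassicalEpsilon.
Open Scope R_scope.

(* Derivative of a one-variable function (0 where it does not exist). *)
Definition der1 (f : R -> R) (x : R) : R :=
  match excluded_middle_informative (exists l, derivable_pt_lim f x l) with
  | left H => proj1_sig (constructive_indefinite_description _ H)
  | right _ => 0
  end.

Definition pd1 (f : R -> R -> R) (a b : R) : R := der1 (fun r => f r b) a.
Definition pd2 (f : R -> R -> R) (a b : R) : R := der1 (fun s => f a s) b.

(* Oriented Riemann integral int_a^b f (0 if f is not Riemann integrable;
   RiemannInt is independent of the integrability proof). *)
Definition integral (f : R -> R) (a b : R) : R :=
  match excluded_middle_informative (exists pr : Riemann_integrable f a b, True) with
  | left H => RiemannInt (proj1_sig (constructive_indefinite_description _ H))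
  | right _ => 0
  end.

(* L^2 inner product on omega = [a,b] *)
Definition ip (a b : R) (f g : R -> R) : R := integral (fun x => f x * g x) a b.

Definition cont2_on (D : R -> R -> Prop) (f : R -> R -> R) : Prop :=
  forall a b, D a b -> forall eps, 0 < eps -> exists del, 0 < del /\
    forall a' b', Rabs (a' - a) < del -> Rabs (b' - b) < del ->
      Rabs (f a' b' - f a b) < eps.

Fixpoint Ck2 (k : nat) (D : R -> R -> Prop) (f : R -> R -> R) : Prop :=
  match k with
  | O => cont2_on D f
  | S k' => cont2_on D f /\
      (forall a b, D a b ->
         (exists l, derivable_pt_lim (fun r => f r b) a l) /\
         (exists l, derivable_pt_lim (fun s => f a s) b l)) /\
      Ck2 k' D (pd1 f) /\ Ck2 k' D (pd2 f)
  end.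

Fixpoint Ck1 (k : nat) (D : R -> Prop) (f : R -> R) : Prop :=
  match k with
  | O => forall x, D x -> continuity_pt f x
  | S k' => (forall x, D x -> continuity_pt f x) /\
      (forall x, D x -> exists l, derivable_pt_lim f x l) /\
      Ck1 k' D (der1 f)
  end.

(* test-function classes on omega = [a,b] (continuous / C^1 on a
   neighbourhood of [a,b]) *)
Definition C0_near (a b : R) (f : R -> R) : Prop :=
  exists d, 0 < d /\ Ck1 0 (fun x => a - d < x < b + d) f.
Definition C1_near (a b : R) (f : R -> R) : Prop :=
  exists d, 0 < d /\ Ck1 1 (fun x => a - d < x < b + d) f.

Definition pres (P : R -> R -> R) (r th : R) : R := r ^ 2 * pd1 P r th.
Definition eint (P : R -> R -> R) (Q : R -> R) (r th : R) : R :=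
  P r th - th * pd2 P r th + Q th.
Definition entr (P : R -> R -> R) (Q : R -> R) (r th : R) : R :=
  integral (fun tau => der1 Q tau / tau) 1 th - pd2 P r th.
Definition Etot (P : R -> R -> R) (Q : R -> R) (r mm th : R) : R :=
  mm ^ 2 / (2 * r) + r * eint P Q r th.

(* Main.v *)
Require Import Defs.
From Stdlib Require Import Reals Lra ClassicalEpsilon.
From Coquelicot Require Import Coquelicot.
Open Scope R_scope.


Lemma der1_eq f x l : derivable_pt_lim f x l -> der1 f x = l.
Proof.
  intros H. unfold der1.
  destruct (excluded_middle_informative _) as [H1|H1].
  - destruct (constructive_indefinite_description _ H1) as [l' Hl']; simpl.
    exact (uniqueness_limite f x l' l Hl' H).
  - exfalso; apply H1; exists l; exact H.
Qed.

Lemma der1_loc f g x l : locally x (fun y => g y = f y) ->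
  derivable_pt_lim g x l -> der1 f x = l.
Proof.
  intros Hl Hd. apply der1_eq. apply is_derive_Reals.
  apply (is_derive_ext_loc g f); [exact Hl|]. apply is_derive_Reals; exact Hd.
Qed.

Lemma integral_RInt f a b : ex_RInt f a b -> integral f a b = RInt f a b.
Proof.
  intros H. unfold integral.
  destruct (excluded_middle_informative _) as [H1|H1].
  - destruct (constructive_indefinite_description _ H1) as [pr Hpr]; simpl.
    symmetry; apply RInt_Reals.
  - exfalso; apply H1; exists (ex_RInt_Reals_0 f a b H); exact I.
Qed.

Lemma cont2_pt (D : R -> R -> Prop) f a b : cont2_on D f -> D a b -> continuity_2d_pt f a b.
Proof.
  intros H Hd eps. destruct (H a b Hd eps (cond_pos eps)) as [d [Hd0 Hd1]].
  exists (mkposreal d Hd0). intros u v Hu Hv. apply Hd1; assumption.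
Qed.

Lemma Ck2_down k D f : Ck2 (S k) D f -> Ck2 k D f.
Proof.
  revert f; induction k as [|k IH]; intros f H.
  - exact (proj1 H).
  - destruct H as [H1 [H2 [H3 H4]]]. split; [exact H1|]. split; [exact H2|].
    split; apply IH; assumption.
Qed.

Lemma Ck2_1_pt D f a b : Ck2 1 D f -> D a b ->
  derivable_pt_lim (fun r => f r b) a (pd1 f a b) /\
  derivable_pt_lim (fun s => f a s) b (pd2 f a b) /\
  continuity_2d_pt f a b /\ continuity_2d_pt (pd1 f) a b /\ continuity_2d_pt (pd2 f) a b.
Proof.
  intros [H1 [H2 [H3 H4]]] Hd. destruct (H2 a b Hd) as [[l1 E1] [l2 E2]].
  split; [unfold pd1; rewrite (der1_eq _ _ _ E1); exact E1|].
  split; [unfold pd2; rewrite (der1_eq _ _ _ E2); exact E2|].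
  split; [exact (cont2_pt D f a b H1 Hd)|].
  split; [exact (cont2_pt D _ a b H3 Hd)|exact (cont2_pt D _ a b H4 Hd)].
Qed.

Lemma c2_snd f a b : continuity_2d_pt f a b -> continuous (fun v => f a v) b.
Proof.
  intros H. apply continuity_pt_filterlim.
  intros eps Heps. destruct (H (mkposreal eps Heps)) as [d Hd].
  exists d. split; [apply cond_pos|]. intros x [_ Hx].
  simpl in *. unfold R_dist in *. apply Hd; [rewrite Rminus_eq_0, Rabs_R0; apply cond_pos| exact Hx].
Qed.

Lemma c2_fst f a b : continuity_2d_pt f a b -> continuity_pt (fun u => f u b) a.
Proof.
  intros H. 
  intros eps Heps. destruct (H (mkposreal eps Heps)) as [d Hd].
  exists d. split; [apply cond_pos|]. intros x [_ Hx].
  simpl in *. unfold R_dist in *. apply Hd; [exact Hx|rewrite Rminus_eq_0, Rabs_R0; apply cond_pos].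
Qed.

Lemma c2_comp G f g a b : continuity_2d_pt G (f a b) (g a b) ->
  continuity_2d_pt f a b -> continuity_2d_pt g a b ->
  continuity_2d_pt (fun u v => G (f u v) (g u v)) a b.
Proof.
  intros HG Hf Hg eps. destruct (HG eps) as [d1 H1].
  destruct (Hf d1) as [d2 H2]. destruct (Hg d1) as [d3 H3].
  assert (Hd : 0 < Rmin d2 d3) by (apply Rmin_pos; apply cond_pos).
  exists (mkposreal _ Hd). intros u v Hu Hv; simpl in *.
  apply H1.
  - apply H2; eapply Rlt_le_trans; eauto; [apply Rmin_l|apply Rmin_l].
  - apply H3; eapply Rlt_le_trans; eauto; [apply Rmin_r|apply Rmin_r].
Qed.

Lemma c2_pos f a b : continuity_2d_pt f a b -> 0 < f a b ->
  locally_2d (fun u v => 0 < f u v) a b.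
Proof.
  intros H Hp. destruct (H (mkposreal _ Hp)) as [d Hd]. exists d.
  intros u v Hu Hv. specialize (Hd u v Hu Hv). simpl in Hd.
  apply Rabs_def2 in Hd. lra.
Qed.

Lemma c2_pow f a b n : continuity_2d_pt f a b -> continuity_2d_pt (fun u v => f u v ^ n) a b.
Proof.
  intros H. induction n as [|n IH].
  - exact (continuity_2d_pt_const a b 1).
  - simpl. apply continuity_2d_pt_mult; assumption.
Qed.

Lemma c2_div f g a b : continuity_2d_pt f a b -> continuity_2d_pt g a b -> g a b <> 0 ->
  continuity_2d_pt (fun u v => f u v / g u v) a b.
Proof.
  intros Hf Hg Hn. unfold Rdiv. apply continuity_2d_pt_mult; [exact Hf|].
  apply continuity_2d_pt_inv; assumption.
Qed.

Lemma diff_of_partials (G g1 : R -> R -> R) r0 th0 l2 :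
  locally_2d (fun u v => derivable_pt_lim (fun z => G z v) u (g1 u v)) r0 th0 ->
  continuity_2d_pt g1 r0 th0 ->
  derivable_pt_lim (fun s => G r0 s) th0 l2 ->
  differentiable_pt_lim G r0 th0 (g1 r0 th0) l2.
Proof.
  intros [d0 Hd0] Hc Hl eps.
  assert (He2 : 0 < eps / 2) by (generalize (cond_pos eps); lra).
  destruct (Hc (mkposreal _ He2)) as [d1 Hd1].
  destruct (Hl _ He2) as [d2 Hd2].
  assert (Hd : 0 < Rmin d0 (Rmin d1 d2)) by
    (repeat apply Rmin_pos; apply cond_pos).
  exists (mkposreal _ Hd). intros u v Hu Hv; simpl in Hu, Hv.
  assert (Hu0 : Rabs (u - r0) < d0) by (eapply Rlt_le_trans; [exact Hu|apply Rmin_l]).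
  assert (Hu1 : Rabs (u - r0) < d1) by (eapply Rlt_le_trans; [exact Hu|eapply Rle_trans; [apply Rmin_r|apply Rmin_l]]).
  assert (Hv0 : Rabs (v - th0) < d0) by (eapply Rlt_le_trans; [exact Hv|apply Rmin_l]).
  assert (Hv1 : Rabs (v - th0) < d1) by (eapply Rlt_le_trans; [exact Hv|eapply Rle_trans; [apply Rmin_r|apply Rmin_l]]).
  assert (Hv2 : Rabs (v - th0) < d2) by (eapply Rlt_le_trans; [exact Hv|eapply Rle_trans; [apply Rmin_r|apply Rmin_r]]).
  assert (A : Rabs ((G u v - g1 r0 th0 * u) - (G r0 v - g1 r0 th0 * r0)) <= eps/2 * Rabs (u - r0)).
  { apply (bounded_variation (fun z => G z v - g1 r0 th0 * z) (fun z => g1 z v - g1 r0 th0)).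
    intros z Hz. split.
    - apply is_derive_Reals. apply derivable_pt_lim_minus.
      + apply Hd0; [lra|exact Hv0].
      + replace (g1 r0 th0) with (g1 r0 th0 * 1) at 2 by ring.
        apply derivable_pt_lim_scal. apply derivable_pt_lim_id.
    - apply Rlt_le. apply (Hd1 z v); [lra|exact Hv1]. }
  assert (B : Rabs (G r0 v - G r0 th0 - l2 * (v - th0)) <= eps/2 * Rabs (v - th0)).
  { destruct (Req_dec v th0) as [E|E].
    - subst. rewrite !Rminus_eq_0, Rmult_0_r, Rminus_0_r, Rabs_R0. lra.
    - assert (Hh : v - th0 <> 0) by lra.
      specialize (Hd2 (v - th0) Hh Hv2).
      replace (th0 + (v - th0)) with v in Hd2 by ring.
      replace (G r0 v - G r0 th0 - l2 * (v - th0)) with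
        (((G r0 v - G r0 th0) / (v - th0) - l2) * (v - th0)) by (field; exact Hh).
      rewrite Rabs_mult. apply Rmult_le_compat_r; [apply Rabs_pos|lra]. }
  replace (G u v - G r0 th0 - (g1 r0 th0 * (u - r0) + l2 * (v - th0))) with
    (((G u v - g1 r0 th0 * u) - (G r0 v - g1 r0 th0 * r0)) + (G r0 v - G r0 th0 - l2 * (v - th0))) by ring.
  eapply Rle_trans; [apply Rabs_triang|].
  assert (M1 := Rmax_l (Rabs (u - r0)) (Rabs (v - th0))).
  assert (M2 := Rmax_r (Rabs (u - r0)) (Rabs (v - th0))).
  generalize (cond_pos eps); intros. nra.
Qed.


Lemma chain2 (D : R -> R -> Prop) G a b z0 la lb :
  Ck2 1 D G -> locally_2d D (a z0) (b z0) ->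
  derivable_pt_lim a z0 la -> derivable_pt_lim b z0 lb ->
  derivable_pt_lim (fun z => G (a z) (b z)) z0
    (pd1 G (a z0) (b z0) * la + pd2 G (a z0) (b z0) * lb).
Proof.
  intros HG [d Hd] Ha Hb.
  apply derivable_pt_lim_comp_2d; [|exact Ha|exact Hb].
  assert (HD : D (a z0) (b z0)).
  { apply Hd; rewrite Rminus_eq_0, Rabs_R0; apply cond_pos. }
  destruct (Ck2_1_pt D G _ _ HG HD) as [_ [H2 [_ [H4 _]]]].
  apply diff_of_partials; [|exact H4|exact H2].
  exists d. intros u v Hu Hv. exact (proj1 (Ck2_1_pt D G u v HG (Hd u v Hu Hv))).
Qed.

Lemma W (a b T : R) (Good : R -> R -> Prop) (F dF : R -> R -> R) t0 :
  a < b -> 0 < t0 < T ->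
  (forall u v, Good u v -> locally_2d Good u v) ->
  (forall y x, 0 < y < T -> a <= x <= b -> Good y x) ->
  (forall u v, Good u v -> derivable_pt_lim (fun z => F z v) u (dF u v)) ->
  (forall u v, Good u v -> continuity_2d_pt dF u v) ->
  (forall u v, Good u v -> continuity_2d_pt F u v) ->
  RInt (fun x => dF t0 x) a b = 0 ->
  derivable_pt_lim (fun tau => integral (fun x => F tau x) a b) t0 0.
Proof.
  intros Hab Ht Gop Gin Hd Hcd Hc Hz.
  assert (Hmin : Rmin a b = a) by (apply Rmin_left; lra).
  assert (Hmax : Rmax a b = b) by (apply Rmax_right; lra).
  assert (Hex : forall y, 0 < y < T -> ex_RInt (fun x => F y x) a b).
  { intros y Hy. apply (@ex_RInt_continuous R_CompleteNormedModule). rewrite Hmin, Hmax. intros z Hz'.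
    apply c2_snd. apply Hc. apply Gin; assumption. }
  assert (Hloc : locally t0 (fun y => 0 < y < T)).
  { apply (locally_interval _ _ (Finite 0) (Finite T)); simpl; try lra.
    intros; lra. }
  assert (HD : is_derive (fun y => RInt (fun x => F y x) a b) t0
                 (RInt (fun x => Derive (fun u => F u x) t0) a b)).
  { apply (is_derive_RInt_param F a b t0).
    - destruct Hloc as [e He]. exists e. intros y Hy x Hx. rewrite Hmin, Hmax in Hx.
      exists (dF y x). apply is_derive_Reals. apply Hd. apply Gin; [apply He; exact Hy|exact Hx].
    - intros x Hx. rewrite Hmin, Hmax in Hx.
      apply (continuity_2d_pt_ext_loc dF).
      + assert (HG := Gop _ _ (Gin _ _ Ht Hx)). destruct HG as [e He].
        exists e. intros u v Hu Hv. symmetry. apply is_derive_unique.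
        apply is_derive_Reals. apply Hd. apply He; assumption.
      + apply Hcd. apply Gin; assumption.
    - destruct Hloc as [e He]. exists e. intros y Hy. apply Hex. apply He; exact Hy. }
  rewrite (RInt_ext _ (fun x => dF t0 x)) in HD.
  2:{ rewrite Hmin, Hmax. intros x Hx. apply is_derive_unique. apply is_derive_Reals.
      apply Hd. apply Gin; [exact Ht|lra]. }
  rewrite Hz in HD.
  apply is_derive_Reals.
  apply (is_derive_ext_loc (fun y => RInt (fun x => F y x) a b)); [|exact HD].
  destruct Hloc as [e He]. exists e. intros y Hy. symmetry. apply integral_RInt.
  apply Hex. apply He; exact Hy.
Qed.

Lemma cont_pt_eps f x : continuous f x -> forall eps, 0 < eps ->
  exists d, 0 < d /\ forall y, Rabs (y - x) < d -> Rabs (f y - f x) < eps.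
Proof.
  intros H eps He. apply continuity_pt_filterlim in H.
  destruct (H eps He) as [d [Hd Hy]]. exists d. split; [exact Hd|].
  intros y Hyx. destruct (Req_dec y x) as [E|E].
  - subst. rewrite Rminus_eq_0, Rabs_R0; exact He.
  - apply (Hy y). split; [split; [exact I|congruence]|exact Hyx].
Qed.

Lemma RInt_sq_zero q a b : a < b -> (forall x, a <= x <= b -> continuous q x) ->
  RInt (fun x => q x * q x) a b = 0 -> forall x, a < x < b -> q x = 0.
Proof.
  intros Hab Hc Hz x0 Hx0.
  destruct (Req_dec (q x0) 0) as [E|E]; [exact E|exfalso].
  set (g := fun x => q x * q x).
  assert (Hgc : forall x, a <= x <= b -> continuous g x).
  { intros x Hx. apply (continuous_mult q q); apply Hc; exact Hx. }
  assert (Hc0 : 0 < g x0) by (unfold g; nra).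
  assert (Hp : 0 < g x0 / 2) by lra.
  destruct (cont_pt_eps g x0 (Hgc x0 ltac:(lra)) _ Hp) as [d [Hd Hdy]].
  set (e := Rmin (d/2) (Rmin ((x0 - a)/2) ((b - x0)/2))).
  assert (He1 : e <= d/2) by apply Rmin_l.
  assert (He2 : e <= (x0-a)/2) by (eapply Rle_trans; [apply Rmin_r|apply Rmin_l]).
  assert (He3 : e <= (b-x0)/2) by (eapply Rle_trans; [apply Rmin_r|apply Rmin_r]).
  assert (He0 : 0 < e) by (unfold e; repeat apply Rmin_pos; lra).
  assert (Ex : forall c d', a <= c -> c <= d' -> d' <= b -> ex_RInt g c d').
  { intros c d' H1 H2 H3. apply (@ex_RInt_continuous R_CompleteNormedModule). intros z Hz'.
    rewrite Rmin_left in Hz' by lra. rewrite Rmax_right in Hz' by lra. apply Hgc; lra. }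
  assert (I1 : 0 <= RInt g a (x0 - e)).
  { apply RInt_ge_0; [lra|apply Ex; lra|]. intros; unfold g; nra. }
  assert (I3 : 0 <= RInt g (x0 + e) b).
  { apply RInt_ge_0; [lra|apply Ex; lra|]. intros; unfold g; nra. }
  assert (I2 : 0 < RInt g (x0 - e) (x0 + e)).
  { apply RInt_gt_0; [lra| |].
    - intros x Hx. assert (Rabs (x - x0) < d) by (apply Rabs_def1; lra).
      specialize (Hdy x H). apply Rabs_def2 in Hdy. lra.
    - intros x Hx. apply Hgc; lra. }
  assert (Sum : RInt g a b = RInt g a (x0 - e) + RInt g (x0 - e) (x0 + e) + RInt g (x0 + e) b).
  { rewrite <- (RInt_Chasles g a (x0 - e) b); [|apply Ex; lra|apply Ex; lra].
    rewrite <- (RInt_Chasles g (x0 - e) (x0 + e) b); [|apply Ex; lra|apply Ex; lra].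
    simpl. unfold plus; simpl. ring. }
  assert (RInt g a b = 0) by exact Hz. lra.
Qed.

Lemma S_deriv (g : R -> R) th : (forall t, 0 < t -> continuity_pt g t) -> 0 < th ->
  derivable_pt_lim (fun y => integral (fun tau => g tau / tau) 1 y) th (g th / th).
Proof.
  intros Hg Hth.
  set (h := fun tau => g tau / tau).
  assert (Hh : forall t, 0 < t -> continuous h t).
  { intros t Ht. apply continuity_pt_filterlim. unfold h.
    apply continuity_pt_div; [apply Hg; exact Ht|apply continuity_pt_id|lra]. }
  assert (Hex : forall y, 0 < y -> ex_RInt h 1 y).
  { intros y Hy. apply (@ex_RInt_continuous R_CompleteNormedModule). intros z Hz. apply Hh.
    assert (0 < Rmin 1 y) by (apply Rmin_pos; lra). lra. }
  assert (Hloc : locally th (fun y => 0 < y)).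
  { apply (locally_interval _ _ (Finite 0) p_infty); simpl; try lra; auto. }
  apply is_derive_Reals.
  apply (is_derive_ext_loc (fun y => RInt h 1 y)).
  - destruct Hloc as [e He]. exists e. intros y Hy. symmetry. apply integral_RInt.
    apply Hex. apply He; exact Hy.
  - apply (is_derive_RInt h (fun y => RInt h 1 y) 1 th); [|apply Hh; exact Hth].
    destruct Hloc as [e He]. exists e. intros y Hy. apply (@RInt_correct R_CompleteNormedModule). apply Hex. apply He; exact Hy.
Qed.


Lemma dplus f g x a b : derivable_pt_lim f x a -> derivable_pt_lim g x b ->
  derivable_pt_lim (fun z => f z + g z) x (a + b).
Proof. intros; apply (derivable_pt_lim_plus f g); assumption. Qed.
Lemma dminus f g x a b : derivable_pt_lim f x a -> derivable_pt_lim g x b ->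
  derivable_pt_lim (fun z => f z - g z) x (a - b).
Proof. intros; apply (derivable_pt_lim_minus f g); assumption. Qed.
Lemma dmult f g x a b : derivable_pt_lim f x a -> derivable_pt_lim g x b ->
  derivable_pt_lim (fun z => f z * g z) x (a * g x + f x * b).
Proof. intros; apply (derivable_pt_lim_mult f g); assumption. Qed.
Lemma ddiv f g x a b : derivable_pt_lim f x a -> derivable_pt_lim g x b -> g x <> 0 ->
  derivable_pt_lim (fun z => f z / g z) x ((a * g x - b * f x) / (g x)²).
Proof. intros; apply (derivable_pt_lim_div f g); assumption. Qed.
Lemma dconst c x : derivable_pt_lim (fun _ => c) x 0.
Proof. apply (derivable_pt_lim_const c). Qed.
Lemma dpow2 f x a : derivable_pt_lim f x a -> derivable_pt_lim (fun z => f z ^ 2) x (2 * f x * a).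
Proof.
  intros H. assert (H2 := dmult f f x a a H H).
  replace (2 * f x * a) with (a * f x + f x * a) by ring.
  intros eps He. destruct (H2 eps He) as [d Hd]. exists d. intros h Hh Hh'.
  specialize (Hd h Hh Hh'). simpl. rewrite !Rmult_1_r. exact Hd.
Qed.
Lemma dcomp1 (g : R -> R) f x a b : derivable_pt_lim f x a -> derivable_pt_lim g (f x) b ->
  derivable_pt_lim (fun z => g (f z)) x (b * a).
Proof. intros; apply (derivable_pt_lim_comp f g); assumption. Qed.
Lemma deq f x l1 l2 : derivable_pt_lim f x l1 -> l1 = l2 -> derivable_pt_lim f x l2.
Proof. intros H E; subst; exact H. Qed.

Lemma ip_clean a b f g (H : R -> R -> R) t : a < b ->
  (forall x, a < x < b -> f x * g x = H t x) ->
  (forall x, a <= x <= b -> continuity_2d_pt H t x) ->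
  ip a b f g = RInt (fun x => H t x) a b.
Proof.
  intros Hab E C. unfold ip.
  assert (Hmin : Rmin a b = a) by (apply Rmin_left; lra).
  assert (Hmax : Rmax a b = b) by (apply Rmax_right; lra).
  assert (Ex : ex_RInt (fun x => H t x) a b).
  { apply (@ex_RInt_continuous R_CompleteNormedModule). rewrite Hmin, Hmax.
    intros z Hz. apply c2_snd, C; exact Hz. }
  rewrite integral_RInt.
  - apply RInt_ext. rewrite Hmin, Hmax. exact E.
  - apply (ex_RInt_ext (fun x => H t x)); [|exact Ex].
    rewrite Hmin, Hmax. intros; symmetry; apply E; assumption.
Qed.

Lemma exR a b (H : R -> R -> R) t : a < b ->
  (forall x, a <= x <= b -> continuity_2d_pt H t x) -> ex_RInt (fun x => H t x) a b.
Proof.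
  intros Hab C. apply (@ex_RInt_continuous R_CompleteNormedModule).
  rewrite Rmin_left, Rmax_right by lra. intros z Hz. apply c2_snd, C; exact Hz.
Qed.

Lemma RInt_add2 a b (K1 K2 : R -> R -> R) t : a < b ->
  (forall x, a <= x <= b -> continuity_2d_pt K1 t x) ->
  (forall x, a <= x <= b -> continuity_2d_pt K2 t x) ->
  RInt (fun x => K1 t x + K2 t x) a b = RInt (fun x => K1 t x) a b + RInt (fun x => K2 t x) a b.
Proof.
  intros Hab C1 C2.
  exact (RInt_plus (V := R_CompleteNormedModule) _ _ a b (exR a b K1 t Hab C1) (exR a b K2 t Hab C2)).
Qed.

Lemma RInt_lin3 a b (K1 K2 K3 : R -> R -> R) t : a < b ->
  (forall x, a <= x <= b -> continuity_2d_pt K1 t x) ->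
  (forall x, a <= x <= b -> continuity_2d_pt K2 t x) ->
  (forall x, a <= x <= b -> continuity_2d_pt K3 t x) ->
  RInt (fun x => K1 t x - K2 t x + K3 t x) a b =
  RInt (fun x => K1 t x) a b - RInt (fun x => K2 t x) a b + RInt (fun x => K3 t x) a b.
Proof.
  intros Hab C1 C2 C3.
  rewrite (RInt_add2 a b (fun t x => K1 t x - K2 t x) K3 t Hab); [|intros; apply continuity_2d_pt_minus; auto|auto].
  f_equal.
  exact (RInt_minus (V := R_CompleteNormedModule) _ _ a b (exR a b K1 t Hab C1) (exR a b K2 t Hab C2)).
Qed.
Lemma dopp f x a : derivable_pt_lim f x a -> derivable_pt_lim (fun z => - f z) x (- a).
Proof. intros; apply (derivable_pt_lim_opp f); assumption. Qed.
Lemma RInt_ext_R (f g : R -> R) a b : a < b -> (forall x, a < x < b -> f x = g x) ->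
  RInt f a b = RInt g a b.
Proof. intros Hab H. apply RInt_ext. rewrite Rmin_left, Rmax_right by lra. exact H. Qed.

Ltac dbl H := let X := fresh in pose proof H as X; destruct X as (?&?&?&?&?&?&?&?&?&?&?&?&?&?&?&?&?).
Ltac c2t := repeat (first [ assumption | apply continuity_2d_pt_const | apply continuity_2d_pt_plus | apply continuity_2d_pt_minus | apply continuity_2d_pt_mult | apply c2_div | apply continuity_2d_pt_opp | apply c2_pow | apply continuity_2d_pt_inv ]).
Definition Sf (Q : R -> R) (y : R) : R := integral (fun tau => der1 Q tau / tau) 1 y.
Theorem lemma3
  (v1 v2 T : R) (P : R -> R -> R) (Q : R -> R) (cv : R)
  (rho m theta : R -> R -> R)
  (Hv : v1 < v2) (HT : 0 < T)
  (* constitutive assumptions *)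
  (HP : Ck2 3 (fun r th => 0 < r /\ 0 < th) P)
  (HQ : Ck1 2 (fun th => 0 < th) Q)
  (Hcv : 0 < cv)
  (HP1 : forall r th, 0 < r -> 0 < th -> 0 <= pd1 P r th)
  (HP2 : forall r th, 0 < r -> 0 < th ->
           0 <= pd1 (fun r' th' => r' * pd1 P r' th') r th)
  (HP3 : forall r th, 0 < r -> 0 < th ->
           cv <= der1 Q th - th * pd2 (pd2 P) r th)
  (* smooth positive triple on (0,T] x omega *)
  (Hsm : exists del, 0 < del /\
     let D := fun t x => 0 < t < T + del /\ v1 - del < x < v2 + del in
     Ck2 1 D rho /\ Ck2 1 D m /\ Ck2 1 D theta)
  (Hpos : forall t x, 0 < t <= T -> v1 <= x <= v2 ->
            0 < rho t x /\ 0 < theta t x)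
  (* boundary condition *)
  (Hbd : forall t, 0 < t <= T -> m t v1 = 0 /\ m t v2 = 0)
  (* weak equations *)
  (Hmass : forall t, 0 < t <= T -> forall q, C0_near v1 v2 q ->
     ip v1 v2 (fun x => pd1 rho t x) q + ip v1 v2 (fun x => pd2 m t x) q = 0)
  (Hmom : forall t, 0 < t <= T -> forall v, C1_near v1 v2 v ->
     v v1 = 0 -> v v2 = 0 ->
     ip v1 v2 (fun x => / rho t x * pd1 m t x
                        - m t x / (2 * rho t x ^ 2) * pd1 rho t x) v
     - ip v1 v2 (fun x => m t x ^ 2 / (2 * rho t x ^ 2)
                          + pd1 (fun r th => r * P r th) (rho t x) (theta t x))
                (der1 v)
     + ip v1 v2 (fun x => m t x / (2 * rho t x ^ 2) * pd2 m t x
                          - pd2 P (rho t x) (theta t x) * pd2 theta t x) v = 0)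
  (Hen : forall t, 0 < t <= T -> forall w, C1_near v1 v2 w ->
     ip v1 v2 (fun x => rho t x
                 * pd1 (fun t' x' => eint P Q (rho t' x') (theta t' x')) t x
                 - pres P (rho t x) (theta t x) / rho t x * pd1 rho t x)
              (fun x => w x / theta t x)
     - ip v1 v2 (fun x => Q (theta t x)
                          - theta t x * pd2 P (rho t x) (theta t x))
                (der1 (fun x => m t x * (w x / theta t x)))
     + ip v1 v2 (fun x => m t x * pd2 P (rho t x) (theta t x) * pd2 theta t x)
                (fun x => w x / theta t x) = 0) :
  forall t, 0 < t < T ->
    derivable_pt_lim (fun tau => integral (fun x => rho tau x) v1 v2) t 0 /\
    derivable_pt_lim
      (fun tau => integral (fun x => Etot P Q (rho tau x) (m tau x) (theta tau x)) v1 v2)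
      t 0 /\
    derivable_pt_lim
      (fun tau => integral (fun x => rho tau x * entr P Q (rho tau x) (theta tau x)) v1 v2)
      t 0.
Proof.
  intros t Ht.
  destruct Hsm as [del [Hdel Hsm']].
  set (Dd := fun t x => 0 < t < T + del /\ v1 - del < x < v2 + del) in Hsm'.
  destruct Hsm' as [Cr [Cm Cth]].
  set (Qd := fun r th => 0 < r /\ 0 < th).
  assert (HPa : Ck2 1 Qd P) by (apply Ck2_down, Ck2_down; exact HP).
  assert (HPb : Ck2 1 Qd (pd2 P)) by (apply Ck2_down; exact (proj2 (proj2 (proj2 HP)))).
  assert (Qopen : forall r th, 0 < r -> 0 < th -> locally_2d Qd r th).
  { intros r th Hr Hth. assert (Hm : 0 < Rmin r th) by (apply Rmin_pos; lra).
    exists (mkposreal _ Hm). intros u v Hu0 Hv0; simpl in *.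
    apply Rabs_def2 in Hu0; apply Rabs_def2 in Hv0.
    assert (Rmin r th <= r) by apply Rmin_l. assert (Rmin r th <= th) by apply Rmin_r.
    unfold Qd; split; lra. }
  destruct HQ as [Qc [Qdx [Q1c _]]].
  assert (Qd1 : forall th, 0 < th -> derivable_pt_lim Q th (der1 Q th)).
  { intros th Hth. destruct (Qdx th Hth) as [l Hl]. rewrite (der1_eq _ _ _ Hl). exact Hl. }
  assert (Sd : forall th, 0 < th -> derivable_pt_lim (Sf Q) th (der1 Q th / th)).
  { intros th Hth. apply S_deriv; [|exact Hth]. intros; apply Q1c; assumption. }
  assert (Sc : forall th, 0 < th -> continuity_pt (Sf Q) th).
  { intros th Hth. apply derivable_continuous_pt. exists (der1 Q th / th). apply Sd; exact Hth. }
  set (Good := fun u v => Dd u v /\ 0 < rho u v /\ 0 < theta u v).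
  assert (Gin : forall y x, 0 < y < T -> v1 <= x <= v2 -> Good y x).
  { intros y x Hy Hx. split; [unfold Dd; split; lra|]. apply Hpos; lra. }
  assert (Gop : forall u v, Good u v -> locally_2d Good u v).
  { intros u v [HD [Hr Hth]].
    apply locally_2d_and; [|apply locally_2d_and].
    - destruct HD as [H1 H2].
      assert (Hm : 0 < Rmin (Rmin (u - 0) (T + del - u)) (Rmin (v - (v1 - del)) (v2 + del - v)))
        by (repeat apply Rmin_pos; lra).
      exists (mkposreal _ Hm). intros u' v' Hu0 Hv0; simpl in *.
      apply Rabs_def2 in Hu0; apply Rabs_def2 in Hv0.
      assert (A1 := Rmin_l (Rmin (u - 0) (T + del - u)) (Rmin (v - (v1 - del)) (v2 + del - v))).
      assert (A2 := Rmin_r (Rmin (u - 0) (T + del - u)) (Rmin (v - (v1 - del)) (v2 + del - v))).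
      assert (A3 := Rmin_l (u - 0) (T + del - u)). assert (A4 := Rmin_r (u - 0) (T + del - u)).
      assert (A5 := Rmin_l (v - (v1 - del)) (v2 + del - v)). assert (A6 := Rmin_r (v - (v1 - del)) (v2 + del - v)).
      unfold Dd; split; split; lra.
    - apply c2_pos; [exact (proj1 (proj2 (proj2 (Ck2_1_pt Dd rho u v Cr HD))))|exact Hr].
    - apply c2_pos; [exact (proj1 (proj2 (proj2 (Ck2_1_pt Dd theta u v Cth HD))))|exact Hth]. }
  assert (BL : forall u v, Good u v ->
    continuity_2d_pt rho u v /\ continuity_2d_pt m u v /\ continuity_2d_pt theta u v /\
    continuity_2d_pt (pd1 rho) u v /\ continuity_2d_pt (pd1 m) u v /\ continuity_2d_pt (pd1 theta) u v /\
    continuity_2d_pt (pd2 rho) u v /\ continuity_2d_pt (pd2 m) u v /\ continuity_2d_pt (pd2 theta) u v /\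
    continuity_2d_pt (fun u v => P (rho u v) (theta u v)) u v /\
    continuity_2d_pt (fun u v => pd1 P (rho u v) (theta u v)) u v /\
    continuity_2d_pt (fun u v => pd2 P (rho u v) (theta u v)) u v /\
    continuity_2d_pt (fun u v => pd1 (pd2 P) (rho u v) (theta u v)) u v /\
    continuity_2d_pt (fun u v => pd2 (pd2 P) (rho u v) (theta u v)) u v /\
    continuity_2d_pt (fun u v => Q (theta u v)) u v /\
    continuity_2d_pt (fun u v => der1 Q (theta u v)) u v /\
    continuity_2d_pt (fun u v => Sf Q (theta u v)) u v).
  { intros u v [HD [Hr Hth]].
    destruct (Ck2_1_pt Dd rho u v Cr HD) as [_ [_ [R1 [R2 R3]]]].
    destruct (Ck2_1_pt Dd m u v Cm HD) as [_ [_ [M1 [M2 M3]]]].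
    destruct (Ck2_1_pt Dd theta u v Cth HD) as [_ [_ [T1 [T2 T3]]]].
    assert (HQp : Qd (rho u v) (theta u v)) by (split; assumption).
    destruct (Ck2_1_pt Qd P _ _ HPa HQp) as [_ [_ [P0 [P1 P2]]]].
    destruct (Ck2_1_pt Qd (pd2 P) _ _ HPb HQp) as [_ [_ [_ [P21 P22]]]].
    repeat split; try assumption;
      try (apply (c2_comp _ rho theta); assumption);
      apply continuity_1d_2d_pt_comp; try assumption.
    - apply Qc; exact Hth.
    - apply Q1c; exact Hth.
    - apply Sc; exact Hth. }
  assert (DT : forall u v, Good u v ->
    derivable_pt_lim (fun z => rho z v) u (pd1 rho u v) /\
    derivable_pt_lim (fun z => m z v) u (pd1 m u v) /\
    derivable_pt_lim (fun z => theta z v) u (pd1 theta u v) /\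
    derivable_pt_lim (fun z => m u z) v (pd2 m u v) /\
    derivable_pt_lim (fun z => theta u z) v (pd2 theta u v)).
  { intros u v [HD _].
    destruct (Ck2_1_pt Dd rho u v Cr HD) as [R1 _].
    destruct (Ck2_1_pt Dd m u v Cm HD) as [M1 [M2 _]].
    destruct (Ck2_1_pt Dd theta u v Cth HD) as [T1 [T2 _]].
    repeat split; assumption. }
  assert (ChP : forall (G : R -> R -> R) a b z0 la lb, Ck2 1 Qd G -> 0 < a z0 -> 0 < b z0 ->
    derivable_pt_lim a z0 la -> derivable_pt_lim b z0 lb ->
    derivable_pt_lim (fun z => G (a z) (b z)) z0
      (pd1 G (a z0) (b z0) * la + pd2 G (a z0) (b z0) * lb)).
  { intros G a b z0 la lb HG Ha Hb Hla Hlb. apply (chain2 Qd); try assumption. apply Qopen; assumption. }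
  pose (et := fun u v =>
    (pd1 P (rho u v) (theta u v) * pd1 rho u v + pd2 P (rho u v) (theta u v) * pd1 theta u v)
    - (pd1 theta u v * pd2 P (rho u v) (theta u v) + theta u v *
        (pd1 (pd2 P) (rho u v) (theta u v) * pd1 rho u v + pd2 (pd2 P) (rho u v) (theta u v) * pd1 theta u v))
    + der1 Q (theta u v) * pd1 theta u v).
  assert (Det : forall u v, Good u v ->
    derivable_pt_lim (fun z => eint P Q (rho z v) (theta z v)) u (et u v)).
  { intros u v Hg. destruct (DT u v Hg) as [D1 [_ [D3 _]]]. destruct Hg as [_ [Hr Hth]].
    unfold eint, et.
    apply (dplus (fun z => P (rho z v) (theta z v) - theta z v * pd2 P (rho z v) (theta z v)) (fun z => Q (theta z v)));
      [apply (dminus (fun z => P (rho z v) (theta z v)) (fun z => theta z v * pd2 P (rho z v) (theta z v)));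
       [|apply (dmult (fun z => theta z v) (fun z => pd2 P (rho z v) (theta z v)))]|].
    - apply (ChP P (fun z => rho z v) (fun z => theta z v)); assumption.
    - exact D3.
    - apply (ChP (pd2 P) (fun z => rho z v) (fun z => theta z v)); assumption.
    - apply (dcomp1 Q (fun z => theta z v)); [exact D3|apply Qd1; exact Hth]. }
  assert (Eet : forall u v, Good u v ->
    pd1 (fun t' x' => eint P Q (rho t' x') (theta t' x')) u v = et u v).
  { intros u v Hg. unfold pd1. apply der1_eq. exact (Det u v Hg). }
  assert (ErP : forall r th, 0 < r -> 0 < th ->
    pd1 (fun r th => r * P r th) r th = P r th + r * pd1 P r th).
  { intros r th Hr Hth. unfold pd1 at 1. apply der1_eq.
    destruct (Ck2_1_pt Qd P r th HPa (conj Hr Hth)) as [H1 _].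
    apply (deq _ _ _ _ (dmult (fun z => z) (fun z => P z th) r 1 _ (derivable_pt_lim_id r) H1)). ring. }
  assert (Ht' : 0 < t <= T) by lra.
  assert (Z : forall x, v1 < x < v2 -> pd1 rho t x + pd2 m t x = 0).
  { set (q := fun u v => pd1 rho u v + pd2 m u v).
    assert (Cq : forall u v, Good u v -> continuity_2d_pt q u v).
    { intros u v Hg. destruct (BL u v Hg) as [_ [_ [_ [R1 [_ [_ [_ [M2 _]]]]]]]].
      apply continuity_2d_pt_plus; assumption. }
    assert (Cq' : forall u v, Dd u v -> continuity_2d_pt q u v).
    { intros u v HD. destruct (Ck2_1_pt Dd rho u v Cr HD) as [_ [_ [_ [R1 _]]]].
      destruct (Ck2_1_pt Dd m u v Cm HD) as [_ [_ [_ [_ M2]]]].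
      apply continuity_2d_pt_plus; assumption. }
    assert (Hq := Hmass t Ht' (fun x => q t x)).
    assert (C0 : C0_near v1 v2 (fun x => q t x)).
    { exists del. split; [exact Hdel|]. intros x Hx. apply continuity_pt_filterlim.
      apply c2_snd. apply Cq'. unfold Dd; split; lra. }
    specialize (Hq C0).
    rewrite (ip_clean v1 v2 _ _ (fun u v => pd1 rho u v * q u v) t Hv) in Hq.
    2:{ intros; reflexivity. }
    2:{ intros x Hx. apply continuity_2d_pt_mult; [apply (BL t x (Gin t x Ht Hx))|apply Cq, Gin; assumption]. }
    rewrite (ip_clean v1 v2 _ _ (fun u v => pd2 m u v * q u v) t Hv) in Hq.
    2:{ intros; reflexivity. }
    2:{ intros x Hx. apply continuity_2d_pt_mult; [apply (BL t x (Gin t x Ht Hx))|apply Cq, Gin; assumption]. }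
    rewrite <- (RInt_add2 v1 v2 (fun u v => pd1 rho u v * q u v) (fun u v => pd2 m u v * q u v) t Hv) in Hq.
    2:{ intros x Hx. apply continuity_2d_pt_mult; [apply (BL t x (Gin t x Ht Hx))|apply Cq, Gin; assumption]. }
    2:{ intros x Hx. apply continuity_2d_pt_mult; [apply (BL t x (Gin t x Ht Hx))|apply Cq, Gin; assumption]. }
    intros x Hx. apply (RInt_sq_zero (fun x => q t x) v1 v2 Hv).
    - intros z Hz. apply c2_snd. apply Cq, Gin; assumption.
    - etransitivity; [|exact Hq]. apply RInt_ext. intros x0 _. unfold q. change ((pd1 rho t x0 + pd2 m t x0) * (pd1 rho t x0 + pd2 m t x0) = pd1 rho t x0 * (pd1 rho t x0 + pd2 m t x0) + pd2 m t x0 * (pd1 rho t x0 + pd2 m t x0)). ring.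
    - exact Hx. }
  assert (Mass : derivable_pt_lim (fun tau => integral (fun x => rho tau x) v1 v2) t 0).
  { apply (W v1 v2 T Good rho (pd1 rho) t Hv Ht Gop Gin).
    - intros u v Hg; exact (proj1 (DT u v Hg)).
    - intros u v Hg; dbl (BL u v Hg); assumption.
    - intros u v Hg; dbl (BL u v Hg); assumption.
    - rewrite (RInt_ext _ (fun x => - pd2 m t x)).
      2:{ intros x Hx; rewrite Rmin_left, Rmax_right in Hx by lra. specialize (Z x Hx).
          change (pd1 rho t x = - pd2 m t x). lra. }
      assert (IR := is_RInt_derive (V := R_CompleteNormedModule) (fun x => - m t x) (fun x => - pd2 m t x) v1 v2).
      rewrite Rmin_left, Rmax_right in IR by lra.
      assert (IR' : is_RInt (fun x => - pd2 m t x) v1 v2 (minus (- m t v2) (- m t v1))).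
      { apply IR.
      + intros x Hx. apply is_derive_Reals. apply (dopp (fun x => m t x)).
        exact (proj1 (proj2 (proj2 (proj2 (DT t x (Gin t x Ht Hx)))))).
      + intros x Hx. apply (c2_snd (fun u v => - pd2 m u v)). apply continuity_2d_pt_opp.
        dbl (BL t x (Gin t x Ht Hx)); assumption. }
      rewrite (is_RInt_unique _ _ _ _ IR').
      destruct (Hbd t Ht') as [B1 B2]. change (- m t v2 - - m t v1 = 0). lra. }
  assert (C1f : forall f, Ck2 1 Dd f -> C1_near v1 v2 (fun x => f t x)).
  { intros f Cf. exists del. split; [exact Hdel|].
    assert (HD : forall x, v1 - del < x < v2 + del -> Dd t x) by (intros x Hx; unfold Dd; split; lra).
    split; [|split].
    - intros x Hx. destruct (Ck2_1_pt Dd f t x Cf (HD x Hx)) as [_ [_ [F1 _]]].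
      apply continuity_pt_filterlim. exact (c2_snd f t x F1).
    - intros x Hx. destruct (Ck2_1_pt Dd f t x Cf (HD x Hx)) as [_ [F2 _]].
      exists (pd2 f t x). exact F2.
    - intros x Hx. destruct (Ck2_1_pt Dd f t x Cf (HD x Hx)) as [_ [_ [_ [_ F5]]]].
      apply continuity_pt_filterlim. exact (c2_snd (pd2 f) t x F5). }
  assert (Hth1 : forall x, v1 < x < v2 -> locally x (fun y => 0 < theta t y)).
  { intros x Hx. apply (locally_interval _ _ (Finite v1) (Finite v2)); simpl; try lra.
    intros y H1 H2. apply Hpos; lra. }
  pose (HA1 := fun u v => (/ rho u v * pd1 m u v - m u v / (2 * rho u v ^ 2) * pd1 rho u v) * m u v).
  pose (HA2 := fun u v => (m u v ^ 2 / (2 * rho u v ^ 2) + (P (rho u v) (theta u v) + rho u v * pd1 P (rho u v) (theta u v))) * pd2 m u v).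
  pose (HA3 := fun u v => (m u v / (2 * rho u v ^ 2) * pd2 m u v - pd2 P (rho u v) (theta u v) * pd2 theta u v) * m u v).
  pose (HB1 := fun u v => rho u v * et u v - rho u v ^ 2 * pd1 P (rho u v) (theta u v) / rho u v * pd1 rho u v).
  pose (HB2 := fun u v => (Q (theta u v) - theta u v * pd2 P (rho u v) (theta u v)) * pd2 m u v).
  pose (HB3 := fun u v => m u v * pd2 P (rho u v) (theta u v) * pd2 theta u v).
  pose (dE := fun u v => m u v * pd1 m u v / rho u v - m u v ^ 2 * pd1 rho u v / (2 * rho u v ^ 2)
     + pd1 rho u v * (P (rho u v) (theta u v) - theta u v * pd2 P (rho u v) (theta u v) + Q (theta u v))
     + rho u v * et u v).
  assert (Energy : derivable_pt_lim
      (fun tau => integral (fun x => Etot P Q (rho tau x) (m tau x) (theta tau x)) v1 v2) t 0).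
  { apply (W v1 v2 T Good (fun z x => Etot P Q (rho z x) (m z x) (theta z x)) dE t Hv Ht Gop Gin).
    - intros u v Hg. destruct (DT u v Hg) as [D1 [D2 [D3 _]]]. assert (Hg' := Hg). destruct Hg' as [_ [Hr Hth]].
      unfold Etot.
      eapply deq.
      + apply (dplus (fun z => m z v ^ 2 / (2 * rho z v)) (fun z => rho z v * eint P Q (rho z v) (theta z v))).
        * apply (ddiv (fun z => m z v ^ 2) (fun z => 2 * rho z v)).
          -- apply (dpow2 (fun z => m z v)). exact D2.
          -- apply (dmult (fun _ => 2) (fun z => rho z v)); [apply dconst|exact D1].
          -- lra.
        * apply (dmult (fun z => rho z v) (fun z => eint P Q (rho z v) (theta z v))); [exact D1|apply Det; exact Hg].
      + unfold dE, eint, Rsqr. field. lra.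
    - intros u v Hg. assert (Hg' := Hg). destruct Hg' as [_ [Hr Hth]]. dbl (BL u v Hg).
      unfold dE, et. c2t; try lra; try nra.
    - intros u v Hg. assert (Hg' := Hg). destruct Hg' as [_ [Hr Hth]]. dbl (BL u v Hg).
      unfold Etot, eint. c2t; try lra; try nra.
    - assert (Hm := Hmom t Ht' (fun x => m t x) (C1f m Cm) (proj1 (Hbd t Ht')) (proj2 (Hbd t Ht'))).
      assert (He := Hen t Ht' (fun x => theta t x) (C1f theta Cth)).
      cbv beta in He.
      rewrite (ip_clean v1 v2 _ _ HA1 t Hv) in Hm.
      2:{ intros; reflexivity. }
      2:{ intros x Hx. assert (Hg := Gin t x Ht Hx). destruct (Hpos t x Ht' Hx) as [Hr Hth].
          dbl (BL t x Hg). unfold HA1. c2t; try lra; try nra. }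
      rewrite (ip_clean v1 v2 _ _ HA2 t Hv) in Hm.
      2:{ intros x Hx. destruct (Hpos t x Ht' ltac:(lra)) as [Hr Hth]. unfold HA2. rewrite ErP by assumption. reflexivity. }
      2:{ intros x Hx. assert (Hg := Gin t x Ht Hx). destruct (Hpos t x Ht' Hx) as [Hr Hth].
          dbl (BL t x Hg). unfold HA2. c2t; try lra; try nra. }
      rewrite (ip_clean v1 v2 _ _ HA3 t Hv) in Hm.
      2:{ intros; reflexivity. }
      2:{ intros x Hx. assert (Hg := Gin t x Ht Hx). destruct (Hpos t x Ht' Hx) as [Hr Hth].
          dbl (BL t x Hg). unfold HA3. c2t; try lra; try nra. }
      rewrite (ip_clean v1 v2 _ _ HB1 t Hv) in He.
      2:{ intros x Hx. assert (Hg := Gin t x Ht ltac:(lra)). destruct (Hpos t x Ht' ltac:(lra)) as [Hr Hth].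
          rewrite (Eet t x Hg). unfold HB1, pres. field. lra. }
      2:{ intros x Hx. assert (Hg := Gin t x Ht Hx). destruct (Hpos t x Ht' Hx) as [Hr Hth].
          dbl (BL t x Hg). unfold HB1, et. c2t; try lra; try nra. }
      rewrite (ip_clean v1 v2 _ _ HB2 t Hv) in He.
      2:{ intros x Hx. unfold HB2. f_equal. apply (der1_loc _ (fun y => m t y)).
          - destruct (Hth1 x Hx) as [e He']. exists e. intros y Hy. specialize (He' y Hy). simpl in He'.
            field. lra.
          - exact (proj1 (proj2 (proj2 (proj2 (DT t x (Gin t x Ht ltac:(lra))))))). }
      2:{ intros x Hx. assert (Hg := Gin t x Ht Hx). destruct (Hpos t x Ht' Hx) as [Hr Hth].
          dbl (BL t x Hg). unfold HB2. c2t; try lra; try nra. }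
      rewrite (ip_clean v1 v2 _ _ HB3 t Hv) in He.
      2:{ intros x Hx. destruct (Hpos t x Ht' ltac:(lra)) as [Hr Hth]. unfold HB3. field. lra. }
      2:{ intros x Hx. assert (Hg := Gin t x Ht Hx). destruct (Hpos t x Ht' Hx) as [Hr Hth].
          dbl (BL t x Hg). unfold HB3. c2t; try lra; try nra. }
      assert (CC : forall K : R -> R -> R, (forall x, Good t x -> continuity_2d_pt K t x) ->
                forall x, v1 <= x <= v2 -> continuity_2d_pt K t x).
      { intros K HK x Hx. apply HK, Gin; assumption. }
      assert (CA1 : forall x, Good t x -> continuity_2d_pt HA1 t x).
      { intros x Hg. assert (Hg' := Hg). destruct Hg' as [_ [Hr Hth]]. dbl (BL t x Hg). unfold HA1. c2t; try lra; try nra. }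
      assert (CA2 : forall x, Good t x -> continuity_2d_pt HA2 t x).
      { intros x Hg. assert (Hg' := Hg). destruct Hg' as [_ [Hr Hth]]. dbl (BL t x Hg). unfold HA2. c2t; try lra; try nra. }
      assert (CA3 : forall x, Good t x -> continuity_2d_pt HA3 t x).
      { intros x Hg. assert (Hg' := Hg). destruct Hg' as [_ [Hr Hth]]. dbl (BL t x Hg). unfold HA3. c2t; try lra; try nra. }
      assert (CB1 : forall x, Good t x -> continuity_2d_pt HB1 t x).
      { intros x Hg. assert (Hg' := Hg). destruct Hg' as [_ [Hr Hth]]. dbl (BL t x Hg). unfold HB1, et. c2t; try lra; try nra. }
      assert (CB2 : forall x, Good t x -> continuity_2d_pt HB2 t x).
      { intros x Hg. assert (Hg' := Hg). destruct Hg' as [_ [Hr Hth]]. dbl (BL t x Hg). unfold HB2. c2t; try lra; try nra. }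
      assert (CB3 : forall x, Good t x -> continuity_2d_pt HB3 t x).
      { intros x Hg. assert (Hg' := Hg). destruct Hg' as [_ [Hr Hth]]. dbl (BL t x Hg). unfold HB3. c2t; try lra; try nra. }
      rewrite (RInt_ext_R (fun x => dE t x) (fun x => (HA1 t x - HA2 t x + HA3 t x) + (HB1 t x - HB2 t x + HB3 t x)) v1 v2 Hv).
      2:{ intros x Hx. destruct (Hpos t x Ht' ltac:(lra)) as [Hr Hth]. assert (Zx := Z x Hx).
          cbv beta. unfold dE, HA1, HA2, HA3, HB1, HB2, HB3, et.
          replace (pd1 rho t x) with (- pd2 m t x) by lra. field. lra. }
      rewrite (RInt_add2 v1 v2 (fun u v => HA1 u v - HA2 u v + HA3 u v) (fun u v => HB1 u v - HB2 u v + HB3 u v) t Hv).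
      2:{ apply CC. intros x Hg. apply continuity_2d_pt_plus; [apply continuity_2d_pt_minus|]; auto. }
      2:{ apply CC. intros x Hg. apply continuity_2d_pt_plus; [apply continuity_2d_pt_minus|]; auto. }
      rewrite (RInt_lin3 v1 v2 HA1 HA2 HA3 t Hv) by (apply CC; auto).
      rewrite (RInt_lin3 v1 v2 HB1 HB2 HB3 t Hv) by (apply CC; auto).
      rewrite Hm, He. exact (Rplus_0_r 0). }
  pose (HC1 := fun u v => (rho u v * et u v - rho u v ^ 2 * pd1 P (rho u v) (theta u v) / rho u v * pd1 rho u v) * (1 / theta u v)).
  pose (HC2 := fun u v => (Q (theta u v) - theta u v * pd2 P (rho u v) (theta u v)) * (pd2 m u v / theta u v - m u v * pd2 theta u v / theta u v ^ 2)).
  pose (HC3 := fun u v => m u v * pd2 P (rho u v) (theta u v) * pd2 theta u v * (1 / theta u v)).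
  pose (Gx := fun u v => pd2 m u v * (Q (theta u v) / theta u v - Sf Q (theta u v)) - m u v * Q (theta u v) * pd2 theta u v / theta u v ^ 2).
  pose (dS := fun u v => pd1 rho u v * (Sf Q (theta u v) - pd2 P (rho u v) (theta u v)) + rho u v * (der1 Q (theta u v) / theta u v * pd1 theta u v - (pd1 (pd2 P) (rho u v) (theta u v) * pd1 rho u v + pd2 (pd2 P) (rho u v) (theta u v) * pd1 theta u v))).
  assert (Entropy : derivable_pt_lim
      (fun tau => integral (fun x => rho tau x * entr P Q (rho tau x) (theta tau x)) v1 v2) t 0).
  { apply (W v1 v2 T Good (fun z x => rho z x * (Sf Q (theta z x) - pd2 P (rho z x) (theta z x))) dS t Hv Ht Gop Gin).
    - intros u v Hg. destruct (DT u v Hg) as [D1 [D2 [D3 _]]]. assert (Hg' := Hg). destruct Hg' as [_ [Hr Hth]].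
      eapply deq.
      + apply (dmult (fun z => rho z v) (fun z => Sf Q (theta z v) - pd2 P (rho z v) (theta z v))); [exact D1|].
        apply (dminus (fun z => Sf Q (theta z v)) (fun z => pd2 P (rho z v) (theta z v))).
        * apply (dcomp1 (Sf Q) (fun z => theta z v)); [exact D3|apply Sd; exact Hth].
        * apply (ChP (pd2 P) (fun z => rho z v) (fun z => theta z v) u (pd1 rho u v) (pd1 theta u v)); [exact HPb|exact Hr|exact Hth|exact D1|exact D3].
      + unfold dS. ring.
    - intros u v Hg. assert (Hg' := Hg). destruct Hg' as [_ [Hr Hth]]. dbl (BL u v Hg).
      unfold dS. c2t; try lra; try nra.
    - intros u v Hg. assert (Hg' := Hg). destruct Hg' as [_ [Hr Hth]]. dbl (BL u v Hg).
      c2t; try lra; try nra.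
    - assert (C1one : C1_near v1 v2 (fun _ => 1)).
      { exists 1. split; [lra|]. split; [|split].
        - intros x _. apply continuity_pt_const. intros a b; reflexivity.
        - intros x _. exists 0. apply dconst.
        - intros x _. apply continuity_pt_const. intros a b.
          rewrite (der1_eq _ a 0 (dconst 1 a)), (der1_eq _ b 0 (dconst 1 b)). reflexivity. }
      assert (He := Hen t Ht' (fun _ => 1) C1one).
      cbv beta in He.
      rewrite (ip_clean v1 v2 _ _ HC1 t Hv) in He.
      2:{ intros x Hx. assert (Hg := Gin t x Ht ltac:(lra)). destruct (Hpos t x Ht' ltac:(lra)) as [Hr Hth].
          rewrite (Eet t x Hg). unfold HC1, pres. field. lra. }
      2:{ intros x Hx. assert (Hg := Gin t x Ht Hx). destruct (Hpos t x Ht' Hx) as [Hr Hth].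
          dbl (BL t x Hg). unfold HC1, et. c2t; try lra; try nra. }
      rewrite (ip_clean v1 v2 _ _ HC2 t Hv) in He.
      2:{ intros x Hx. assert (Hg := Gin t x Ht ltac:(lra)). destruct (Hpos t x Ht' ltac:(lra)) as [Hr Hth].
          destruct (DT t x Hg) as [_ [_ [_ [E1 E2]]]].
          unfold HC2. f_equal. apply der1_eq. eapply deq.
          + apply (dmult (fun y => m t y) (fun y => 1 / theta t y)); [exact E1|].
            apply (ddiv (fun _ => 1) (fun y => theta t y)); [apply dconst|exact E2|lra].
          + unfold Rsqr. field. lra. }
      2:{ intros x Hx. assert (Hg := Gin t x Ht Hx). destruct (Hpos t x Ht' Hx) as [Hr Hth].
          dbl (BL t x Hg). unfold HC2. c2t; try lra; try nra. }
      rewrite (ip_clean v1 v2 _ _ HC3 t Hv) in He.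
      2:{ intros x Hx. reflexivity. }
      2:{ intros x Hx. assert (Hg := Gin t x Ht Hx). destruct (Hpos t x Ht' Hx) as [Hr Hth].
          dbl (BL t x Hg). unfold HC3. c2t; try lra; try nra. }
      assert (CC : forall K : R -> R -> R, (forall x, Good t x -> continuity_2d_pt K t x) ->
                forall x, v1 <= x <= v2 -> continuity_2d_pt K t x).
      { intros K HK x Hx. apply HK, Gin; assumption. }
      assert (CC1 : forall x, Good t x -> continuity_2d_pt HC1 t x).
      { intros x Hg. assert (Hg' := Hg). destruct Hg' as [_ [Hr Hth]]. dbl (BL t x Hg). unfold HC1, et. c2t; try lra; try nra. }
      assert (CC2 : forall x, Good t x -> continuity_2d_pt HC2 t x).
      { intros x Hg. assert (Hg' := Hg). destruct Hg' as [_ [Hr Hth]]. dbl (BL t x Hg). unfold HC2. c2t; try lra; try nra. }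
      assert (CC3 : forall x, Good t x -> continuity_2d_pt HC3 t x).
      { intros x Hg. assert (Hg' := Hg). destruct Hg' as [_ [Hr Hth]]. dbl (BL t x Hg). unfold HC3. c2t; try lra; try nra. }
      assert (CG : forall x, Good t x -> continuity_2d_pt Gx t x).
      { intros x Hg. assert (Hg' := Hg). destruct Hg' as [_ [Hr Hth]]. dbl (BL t x Hg). unfold Gx. c2t; try lra; try nra. }
      rewrite (RInt_ext_R (fun x => dS t x) (fun x => (HC1 t x - HC2 t x + HC3 t x) + Gx t x) v1 v2 Hv).
      2:{ intros x Hx. destruct (Hpos t x Ht' ltac:(lra)) as [Hr Hth]. assert (Zx := Z x Hx).
          cbv beta. unfold dS, HC1, HC2, HC3, Gx, et.
          replace (pd1 rho t x) with (- pd2 m t x) by lra. field. lra. }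
      rewrite (RInt_add2 v1 v2 (fun u v => HC1 u v - HC2 u v + HC3 u v) Gx t Hv).
      2:{ apply CC. intros x Hg. apply continuity_2d_pt_plus; [apply continuity_2d_pt_minus|]; auto. }
      2:{ apply CC. exact CG. }
      rewrite (RInt_lin3 v1 v2 HC1 HC2 HC3 t Hv) by (apply CC; auto).
      rewrite He.
      assert (IR : is_RInt (fun x => Gx t x) v1 v2
         (minus ((fun x => m t x * (Q (theta t x) / theta t x - Sf Q (theta t x))) v2)
                ((fun x => m t x * (Q (theta t x) / theta t x - Sf Q (theta t x))) v1))).
      { apply (is_RInt_derive (V := R_CompleteNormedModule) (fun x => m t x * (Q (theta t x) / theta t x - Sf Q (theta t x))) (fun x => Gx t x)); rewrite Rmin_left, Rmax_right by lra.
        - intros x Hx. assert (Hg := Gin t x Ht Hx). destruct (Hpos t x Ht' Hx) as [Hr Hth].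
          destruct (DT t x Hg) as [_ [_ [_ [E1 E2]]]].
          apply is_derive_Reals. eapply deq.
          + apply (dmult (fun y => m t y) (fun y => Q (theta t y) / theta t y - Sf Q (theta t y))); [exact E1|].
            apply (dminus (fun y => Q (theta t y) / theta t y) (fun y => Sf Q (theta t y))).
            * apply (ddiv (fun y => Q (theta t y)) (fun y => theta t y)); [|exact E2|lra].
              apply (dcomp1 Q (fun y => theta t y)); [exact E2|apply Qd1; exact Hth].
            * apply (dcomp1 (Sf Q) (fun y => theta t y)); [exact E2|apply Sd; exact Hth].
          + unfold Gx, Rsqr. field. lra.
        - intros x Hx. apply c2_snd. apply CC; [exact CG|exact Hx]. }
      rewrite (is_RInt_unique _ _ _ _ IR). cbv beta.
      destruct (Hbd t Ht') as [B1 B2]. rewrite B1, B2, !Rmult_0_l, minus_eq_zero. exact (Rplus_0_r 0). }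
  exact (conj Mass (conj Energy Entropy)).
Qed.
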